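(* Let $\nabla$ be an ES basic fusion operator with representing basic assignment $\Phi\mapsto\succeq_\Phi$. The following are equivalent: (i) $\nabla$ satisfies (ESF-P); (ii) for every society $N$, every $N$-profile $\Phi$ and all $E,E'\in\mathcal E$ with $|[\![B(E)]\!]|\le 2$, if $B(\nabla(E_i,E))\wedge B(E')\vdash\bot$ for all $i\in N$ then $B(\nabla(\Phi,E))\wedge B(E')\vdash\bot$; (iii) for every society $N$, every $N$-profile $\Phi$ and all interpretations $w,w'$, if $w\succ_{E_i}w'$ for all $i\in N$ then $w\succ_\Phi w'$.
   Context: Setting: epistemic space $(\mathcal E,B,\mathcal L_{\mathcal P})$ ($\mathcal E$ nonempty, $B:\mathcal E\to$ propositional formulas over finite $\mathcal P$, image modulo equivalence exactly the consistent formulas; $\mathcal W_{\mathcal P}$ valuations, $[\![\phi]\!]$ models); agents: well-ordered set $\mathcal S$; society: nonempty finite $N\subseteq\mathcal S$; $N$-profile $\Phi:N\to\mathcal E$, $E_i=\Phi(i)$, identified with $E_i$ if $N=\{i\}$; profiles on $\{i_1<\dots<i_n\}$, $\{j_1<\dots<j_m\}$ equivalent if $n=m$ and entries coincide position-wise. ES basic fusion operator: a map $\nabla(\Phi,E)\in\mathcal E$ with (ESF1) $B(\nabla(\Phi,E))\vdash B(E)$; (ESF2) equivalent profiles and $B(E)\equiv B(E')$ give equivalent $B(\nabla)$; (ESF3) if $B(E)\equiv B(E')\wedge B(E'')$ then $B(\nabla(\Phi,E'))\wedge B(E'')\vdash B(\nabla(\Phi,E))$; (ESF4) if moreover $B(\nabla(\Phi,E'))\wedge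 B(E'')\nvdash\bot$ then $B(\nabla(\Phi,E))\vdash B(\nabla(\Phi,E'))\wedge B(E'')$. Representing basic assignment: the unique $\Phi\mapsto\succeq_\Phi$ (total preorders on $\mathcal W_{\mathcal P}$, $\succ$ strict part, equal on equivalent profiles) with $[\![B(\nabla(\Phi,E))]\!]=\max([\![B(E)]\!],\succeq_\Phi)$, $\max(C,\succeq)=\{c\in C:c\succeq x\ \forall x\in C\}$. (ESF-P): for every society $N$, $N$-profile $\Phi$ and $E,E'$, if $\bigwedge_{i\in N}B(\nabla(E_i,E))\nvdash\bot$ and $B(\nabla(E_i,E))\wedge B(E')\vdash\bot$ for all $i\in N$, then $B(\nabla(\Phi,E))\wedge B(E')\vdash\bot$. *)

(* Defs.v *)
From HB Require Import structures.
From mathcomp Require Import all_boot all_order.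
Set Implicit Arguments. Unset Strict Implicit. Unset Printing Implicit Defensive.

Inductive formula (P : Type) : Type :=
| FVar of P
| FBot
| FTop
| FNeg of formula P
| FAnd of formula P & formula P
| FOr of formula P & formula P
| FImp of formula P & formula P.
Arguments FBot {P}. Arguments FTop {P}.

Definition valuation (P : finType) := {ffun P -> bool}.

Fixpoint eval (P : finType) (w : valuation P) (f : formula P) : bool :=
  match f with
  | FVar p => w p
  | FBot => false
  | FTop => true
  | FNeg g => ~~ eval w g
  | FAnd g h => eval w g && eval w h
  | FOr g h => eval w g || eval w h
  | FImp g h => eval w g ==> eval w h
  end.

Definition models (P : finType) (f : formula P) : {set valuation P} :=
  [set w | eval w f].

Definition entails (P : finType) (f g : formula P) : Prop :=
  forall w : valuation P, eval w f -> eval w g.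
Definition fequiv (P : finType) (f g : formula P) : Prop :=
  entails f g /\ entails g f.
Definition consistent (P : finType) (f : formula P) : Prop := ~ entails f FBot.

Definition bigAnd (P : Type) (fs : seq (formula P)) : formula P :=
  foldr (@FAnd P) FTop fs.

Definition epistemic_space (P : finType) (E : Type) (B : E -> formula P) : Prop :=
  inhabited E /\ (forall e, consistent (B e)) /\
  (forall f, consistent f -> exists e, fequiv (B e) f).

Definition well_ordered d (S : orderType d) : Prop :=
  well_founded (fun x y : S => (x < y)%O).

(* a society = a nonempty finite subset of S, represented canonically by the
   strictly increasing list of its elements *)
Definition society d (S : orderType d) :=
  {N : seq S | (N != [::]) && sorted (fun x y : S => (x < y)%O) N}.

Definition member d (S : orderType d) (N : society S) := {i : S | i \in sval N}.

Definition profile (E : Type) d (S : orderType d) (N : society S) := member N -> E.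

Definition agents d (S : orderType d) (N : society S) : seq (member N) :=
  pmap insub (sval N).

Definition entries E d (S : orderType d) (N : society S) (Phi : profile E N) : seq E :=
  map Phi (agents N).

Definition prof_equiv E d (S : orderType d) (N M : society S)
  (Phi : profile E N) (Psi : profile E M) : Prop := entries Phi = entries Psi.

Lemma single_proof d (S : orderType d) (i : S) :
  ([:: i] != [::]) && sorted (fun x y : S => (x < y)%O) [:: i].
Proof. by []. Qed.

Definition single d (S : orderType d) (i : S) : society S :=
  exist _ [:: i] (single_proof i).

Definition fusion_op (E : Type) d (S : orderType d) :=
  forall N : society S, profile E N -> E -> E.

(* nabla(E_i, E) for the agent i of N, with E_i = Phi(i) *)
Definition fuse_single E d (S : orderType d) (nabla : fusion_op E S)
  (N : society S) (Phi : profile E N) (x : member N) (e : E) : E :=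
  nabla (single (sval x)) (fun _ => Phi x) e.

Section Postulates.
Local Unset Implicit Arguments.
Variables (P : finType) (E : Type) (B : E -> formula P) (d : Order.disp_t)
  (S : orderType d) (nabla : fusion_op E S).

Definition ESF1 : Prop := forall N (Phi : profile E N) e,
  entails (B (nabla N Phi e)) (B e).
Definition ESF2 : Prop := forall N M (Phi : profile E N) (Psi : profile E M) e e',
  prof_equiv Phi Psi -> fequiv (B e) (B e') ->
  fequiv (B (nabla N Phi e)) (B (nabla M Psi e')).
Definition ESF3 : Prop := forall N (Phi : profile E N) e e' e'',
  fequiv (B e) (FAnd (B e') (B e'')) ->
  entails (FAnd (B (nabla N Phi e')) (B e'')) (B (nabla N Phi e)).
Definition ESF4 : Prop := forall N (Phi : profile E N) e e' e'',
  fequiv (B e) (FAnd (B e') (B e'')) ->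
  consistent (FAnd (B (nabla N Phi e')) (B e'')) ->
  entails (B (nabla N Phi e)) (FAnd (B (nabla N Phi e')) (B e'')).

Definition basic_fusion : Prop := ESF1 /\ ESF2 /\ ESF3 /\ ESF4.

Definition ESF_P : Prop := forall N (Phi : profile E N) e e',
  consistent (bigAnd [seq B (fuse_single nabla Phi x e) | x <- agents N]) ->
  (forall x : member N, entails (FAnd (B (fuse_single nabla Phi x e)) (B e')) FBot) ->
  entails (FAnd (B (nabla N Phi e)) (B e')) FBot.
End Postulates.

Definition assignment (P : finType) (E : Type) d (S : orderType d) :=
  forall N : society S, profile E N -> valuation P -> valuation P -> Prop.

Definition total_preorder (T : Type) (R : T -> T -> Prop) : Prop :=
  (forall x y, R x y \/ R y x) /\ (forall x y z, R x y -> R y z -> R x z).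

Definition strict (T : Type) (R : T -> T -> Prop) (x y : T) : Prop :=
  R x y /\ ~ R y x.

Definition in_max (T : finType) (C : {set T}) (R : T -> T -> Prop) (w : T) : Prop :=
  w \in C /\ (forall x, x \in C -> R w x).

Definition represents (P : finType) (E : Type) (B : E -> formula P) d
  (S : orderType d) (nabla : fusion_op E S) (ge : assignment P E S) : Prop :=
  (forall N (Phi : profile E N), total_preorder (ge N Phi)) /\
  (forall N M (Phi : profile E N) (Psi : profile E M), prof_equiv Phi Psi ->
     forall w w', ge N Phi w w' <-> ge M Psi w w') /\
  (forall N (Phi : profile E N) e w,
     w \in models (B (nabla N Phi e)) <-> in_max (models (B e)) (ge N Phi) w).

Arguments ESF1 {P E} B {d S} nabla.
Arguments ESF2 {P E} B {d S} nabla.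
Arguments ESF3 {P E} B {d S} nabla.
Arguments ESF4 {P E} B {d S} nabla.
Arguments basic_fusion {P E} B {d S} nabla.
Arguments ESF_P {P E} B {d S} nabla.

(* Main.v *)
Require Import Defs.
From HB Require Import structures.
From mathcomp Require Import all_boot all_order.


From Stdlib Require Import Classical.

Lemma bigAnd_map (P : finType) (T : Type) (g : T -> formula P) (s : seq T) w :
  eval w (bigAnd (map g s)) = all (fun x => eval w (g x)) s.
Proof. by elim: s => //= a s ->. Qed.

Lemma all_true (T : Type) (p : pred T) (s : seq T) : (forall x, p x) -> all p s.
Proof. by move=> H; elim: s => //= a s ->; rewrite H. Qed.

Lemma two3 (T : finType) (C : {set T}) u v y :
  #|C| <= 2 -> u \in C -> v \in C -> y \in C -> u <> v -> y = u \/ y = v.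
Proof.
move=> Hc Hu Hv Hy Huv.
case: (eqVneq y u) => [->|Hyu]; first by left.
case: (eqVneq y v) => [->|Hyv]; first by right.
exfalso.
have Hs : [set u; v; y] \subset C.
  by apply/subsetP => z; rewrite !inE => /orP [/orP [/eqP->|/eqP->]|/eqP->].
have := subset_leq_card Hs.
rewrite -setUA !cardsU1 cards1 !inE.
have -> : (u == v) = false by apply/eqP.
rewrite ?(negbTE Hyv) ?(negbTE Hyu) ?[v == y]eq_sym ?[u == y]eq_sym ?(negbTE Hyv) ?(negbTE Hyu) /=.
by move=> H; have := leq_trans H Hc.
Qed.

Lemma incons (P : finType) (f : formula P) w : entails f FBot -> eval w f -> False.
Proof. by move=> H /H. Qed.
Arguments incons {P f} w.

Arguments two3 {T C u v y}.
Definition chr (P : finType) (w : valuation P) : formula P :=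
  bigAnd [seq (if w p then FVar p else FNeg (FVar p)) | p <- enum P].

Arguments chr {P} w.
Lemma eval_chr (P : finType) (u w : valuation P) : eval u (chr w) = (u == w).
Proof.
rewrite /chr bigAnd_map; apply/allP/eqP => [H|->].
- apply/ffunP => p; have := H p (mem_enum _ p).
  by case: (w p) => /=; case: (u p).
- by move=> p _; case E: (w p) => /=; rewrite E.
Qed.

Theorem mainTheorem10 (P : finType) (E : Type) (B : E -> formula P)
  (d : Order.disp_t) (S : orderType d)
  (nabla : fusion_op E S) (ge : assignment P E S) :
  epistemic_space B -> well_ordered S ->
  basic_fusion B nabla -> represents B nabla ge ->
  (* (i) <-> (ii) *)
  (ESF_P B nabla <->
   (forall (N : society S) (Phi : profile E N) (e e' : E),
      #|models (B e)| <= 2 ->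
      (forall x : member N,
         entails (FAnd (B (fuse_single nabla Phi x e)) (B e')) FBot) ->
      entails (FAnd (B (nabla N Phi e)) (B e')) FBot)) /\
  (* (ii) <-> (iii) *)
  ((forall (N : society S) (Phi : profile E N) (e e' : E),
      #|models (B e)| <= 2 ->
      (forall x : member N,
         entails (FAnd (B (fuse_single nabla Phi x e)) (B e')) FBot) ->
      entails (FAnd (B (nabla N Phi e)) (B e')) FBot) <->
   (forall (N : society S) (Phi : profile E N) (w w' : valuation P),
      (forall x : member N,
         strict (ge (single (sval x)) (fun _ => Phi x)) w w') ->
      strict (ge N Phi) w w')).
Proof.
move=> es _ _ rep.
case: rep => tp [_ mx].
have refl : forall N Phi w, ge N Phi w w.
  by move=> N Phi w; case: (tp N Phi) => t _; case: (t w w).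
have mxE : forall N Phi e u, eval u (B (nabla N Phi e)) <-> in_max (models (B e)) (ge N Phi) u.
  by move=> N Phi e u; have := mx N Phi e u; rewrite /models inE.
have I2 : ESF_P B nabla -> (forall (N : society S) (Phi : profile E N) (e e' : E),
      #|models (B e)| <= 2 ->
      (forall x : member N,
         entails (FAnd (B (fuse_single nabla Phi x e)) (B e')) FBot) ->
      entails (FAnd (B (nabla N Phi e)) (B e')) FBot).
  move=> HP N Phi e e' Hc Hx u /= /andP [Hu Hu'].
  have [HuC Humax] := (mxE _ _ _ _).1 Hu.
  have notmax : forall x : member N,
      ~ in_max (models (B e)) (ge (single (sval x)) (fun _ => Phi x)) u.
    move=> x Hm; exfalso; apply: (incons u (Hx x)); rewrite /= Hu' andbT.
    exact: ((mxE _ _ _ _).2 Hm).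
  have key : exists w, forall x : member N,
      in_max (models (B e)) (ge (single (sval x)) (fun _ => Phi x)) w.
    destruct (classic (exists v, v \in models (B e) /\ v <> u)) as [[v [Hv Hvu]]|Hno].
    - exists v => x; split => // y Hy.
      have [y0 [Hy0 Hny0]] : exists y, y \in models (B e) /\
          ~ ge (single (sval x)) (fun _ => Phi x) u y.
        apply: NNPP => Hn; apply: (notmax x); split => // z Hz.
        by apply: NNPP => Hn'; apply: Hn; exists z.
      have y0v : y0 = v.
        case: (two3 Hc HuC Hv Hy0 (fun h => Hvu (esym h))) => // y0u.
        by subst y0; exfalso; apply: Hny0; apply: refl.
      subst y0.
      have vu : ge (single (sval x)) (fun _ => Phi x) v u.
        by case: (tp (single (sval x)) (fun _ => Phi x)) => t _; case: (t u v).
      by case: (two3 Hc HuC Hv Hy (fun h => Hvu (esym h))) => ->.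
    - exists u => x; split => // y Hy.
      have -> : y = u by apply: NNPP => H; apply: Hno; exists y.
      exact: refl.
  exfalso; apply: (incons u (HP N Phi e e' _ Hx)); last by rewrite /= Hu Hu'.
  case: key => w Hw Hent; apply: (incons w Hent); rewrite bigAnd_map.
  by apply: all_true => x; apply/(mxE _ _ _ _).2; apply: Hw.
have II3 : (forall (N : society S) (Phi : profile E N) (e e' : E),
      #|models (B e)| <= 2 ->
      (forall x : member N,
         entails (FAnd (B (fuse_single nabla Phi x e)) (B e')) FBot) ->
      entails (FAnd (B (nabla N Phi e)) (B e')) FBot) ->
   (forall (N : society S) (Phi : profile E N) (w w' : valuation P),
      (forall x : member N,
         strict (ge (single (sval x)) (fun _ => Phi x)) w w') ->
      strict (ge N Phi) w w').
  move=> H2 N Phi w w' Hs.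
  case: es => _ [_ surj].
  have [e [h1 h2]] : exists e, fequiv (B e) (FOr (chr w) (chr w')).
    by apply: surj => H; apply: (incons w H); rewrite /= eval_chr eqxx.
  have [e' [h1' h2']] : exists e, fequiv (B e) (chr w').
    by apply: surj => H; apply: (incons w' H); rewrite /= eval_chr eqxx.
  have memE : forall u, u \in models (B e) <-> u = w \/ u = w'.
    move=> u; rewrite /models inE; split.
    - by move/h1; rewrite /= !eval_chr => /orP [/eqP|/eqP]; auto.
    - by move=> [->|->]; apply: h2; rewrite /= !eval_chr eqxx ?orbT.
  have memE' : forall u, eval u (B e') <-> u = w'.
    move=> u; split.
    - by move/h1'; rewrite eval_chr => /eqP.
    - by move=> ->; apply: h2'; rewrite eval_chr eqxx.
  have Hcard : #|models (B e)| <= 2.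
    apply: (@leq_trans #|[set w; w']|).
      apply: subset_leq_card; apply/subsetP => u /memE [->|->];
        by rewrite !inE eqxx ?orbT.
    by rewrite cards2; case: (w != w').
  have Hnot : ~ ge N Phi w' w.
    move=> Hw'w.
    apply: (incons w' (H2 N Phi e e' Hcard _)).
    - move=> x u /= /andP [Hu Hu'].
      have Huw := (memE' u).1 Hu'; subst u.
      have [_ Hm] := (mxE _ _ _ _).1 Hu.
      have := Hm w ((memE w).2 (or_introl erefl)).
      by case: (Hs x).
    - rewrite /=; apply/andP; split; last by apply/(memE' w').2.
      apply/(mxE _ _ _ _).2; split; first by apply/(memE w').2; right.
      by move=> y /memE [->|->] //; apply: refl.
  split => //.
  by case: (tp N Phi) => t _; case: (t w w') => // /Hnot.
have III1 : (forall (N : society S) (Phi : profile E N) (w w' : valuation P),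
      (forall x : member N,
         strict (ge (single (sval x)) (fun _ => Phi x)) w w') ->
      strict (ge N Phi) w w') -> ESF_P B nabla.
  move=> H3 N Phi e e' Hcons Hx u /= /andP [Hu Hu'].
  have [HuC Humax] := (mxE _ _ _ _).1 Hu.
  destruct (classic (exists w, eval w (bigAnd [seq B (fuse_single nabla Phi x e) | x <- agents N])))
    as [[w Hw]|Hn]; last by exfalso; apply: Hcons => v Hv; exfalso; apply: Hn; exists v.
  rewrite bigAnd_map in Hw.
  have Hwx : forall x : member N,
      in_max (models (B e)) (ge (single (sval x)) (fun _ => Phi x)) w.
    move=> x; apply/(mxE _ _ _ _).1.
    move/allP: Hw => Hw; apply: (Hw x).
    by rewrite /agents mem_pmap_sub; case: x.
  destruct (classic (exists x : member N, True)) as [[x0 _]|Hno].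
  - have wC := (Hwx x0).1.
    have := H3 N Phi w u.
    case.
      move=> x; split; first exact: ((Hwx x).2 u HuC).
      move=> Huw; exfalso; apply: (incons u (Hx x)); rewrite /= Hu' andbT.
      apply/(mxE _ _ _ _).2; split => // y Hy.
      by case: (tp (single (sval x)) (fun _ => Phi x)) => _ tr; apply: (tr _ _ _ Huw ((Hwx x).2 y Hy)).
    by move=> _ Hn; exfalso; apply: Hn; exact: (Humax w wC).
  - have := H3 N Phi u u.
    by case=> [x|_ Hn]; [exfalso; apply: Hno; exists x | exfalso; apply: Hn; apply: refl].
split; split.
- exact: I2.
- by move=> H; apply: III1; apply: II3.
- exact: II3.
- by move=> H; apply: I2; apply: III1.
Qed.
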